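(* Let $k>l\ge0$ be integers, $\xi\in\mathbb{C}$, $f:\mathbb{N}\to[0,\infty)$, and $A=\xi(a^\dagger)^ka^l+\xi^*(a^\dagger)^la^k+f(a^\dagger a)$ with domain $\mathcal{D}_0$. Assume there exist $\kappa>2$ and $N\in\mathbb{N}$ such that $f(n)\ge\kappa|\xi|n^{(k+l)/2}$ for all $n\ge N$. Then $A$ is essentially self-adjoint and bounded from below.
   Context: $\mathbb{N}=\{0,1,2,\dots\}$. $\mathcal{H}$ is a separable complex Hilbert space with orthonormal basis $(\phi_n)_{n\in\mathbb{N}}$; $\mathcal{D}_0$ is the set of finite linear combinations of the $\phi_n$. The operators $a,a^\dagger$ have domain $\mathcal{D}_0$ and act by $a\phi_n=\sqrt{n}\,\phi_{n-1}$ ($a\phi_0=0$), $a^\dagger\phi_n=\sqrt{n+1}\,\phi_{n+1}$, extended linearly. $f(a^\dagger a)$ has domain $\mathcal{D}_0$ and $f(a^\dagger a)\phi_n=f(n)\phi_n$. *)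

(* Defs.v *)
From Stdlib Require Import Reals.
From Coquelicot Require Import Coquelicot.
Open Scope R_scope.

(* Concrete model of H: l^2(N, C), with phi_n the n-th unit sequence.
   Vectors are represented by their coordinate sequences. *)
Definition seqC := nat -> C.

Definition l2 (x : seqC) : Prop := ex_series (fun n => Cmod (x n) ^ 2).
Definition nrm2 (x : seqC) : R := Series (fun n => Cmod (x n) ^ 2).
Definition seq_sub (x y : seqC) : seqC := fun n => Cminus (x n) (y n).

(* inner product, antilinear in the first argument *)
Definition inner (x y : seqC) : C :=
  (Series (fun n => Re (Cmult (Cconj (x n)) (y n))),
   Series (fun n => Im (Cmult (Cconj (x n)) (y n)))).

(* D_0: finite linear combinations of the phi_n = finitely supported sequences *)
Definition D0 (x : seqC) : Prop :=
  exists N : nat, forall n : nat, (N <= n)%nat -> x n = RtoC 0.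

(* annihilation a phi_n = sqrt n phi_{n-1}, in coordinates *)
Definition ann (x : seqC) : seqC :=
  fun n => Cmult (RtoC (sqrt (INR (S n)))) (x (S n)).
(* creation a^dag phi_n = sqrt (n+1) phi_{n+1}, in coordinates *)
Definition cre (x : seqC) : seqC :=
  fun n => match n with
           | O => RtoC 0
           | S m => Cmult (RtoC (sqrt (INR (S m)))) (x m)
           end.

Definition op_A (k l : nat) (xi : C) (f : nat -> R) (x : seqC) : seqC :=
  fun n => Cplus (Cplus (Cmult xi (Nat.iter k cre (Nat.iter l ann x) n))
                        (Cmult (Cconj xi) (Nat.iter l cre (Nat.iter k ann x) n)))
                 (Cmult (RtoC (f n)) (x n)).

(* Operators are handled through their graphs (relations on l^2). *)
Definition graph := seqC -> seqC -> Prop.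

Definition graph_D0 (T : seqC -> seqC) : graph := fun x y => D0 x /\ y = T x.

Definition closure (G : graph) : graph := fun x y =>
  l2 x /\ l2 y /\
  forall eps : R, 0 < eps -> exists x' y', G x' y' /\
      nrm2 (seq_sub x x') < eps /\ nrm2 (seq_sub y y') < eps.

Definition adjoint (G : graph) : graph := fun y z =>
  l2 y /\ l2 z /\ forall x w, G x w -> inner w y = inner x z.

Definition self_adjoint (G : graph) : Prop := forall x y, G x y <-> adjoint G x y.

Definition essentially_self_adjoint (G : graph) : Prop := self_adjoint (closure G).

Definition bounded_below_D0 (T : seqC -> seqC) : Prop :=
  exists c : R, forall x, D0 x ->
    Im (inner x (T x)) = 0 /\ c * nrm2 x <= Re (inner x (T x)).

(* Main.v *)
Require Import Defs.
From Stdlib Require Import Reals Lra Lia Psatz.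
From Coquelicot Require Import Coquelicot.
Open Scope R_scope.

Fixpoint fs (a : nat -> R) (N : nat) : R :=
  match N with O => 0 | S N => fs a N + a N end.

Lemma fs_ext (a b : nat -> R) N : (forall n, (n < N)%nat -> a n = b n) -> fs a N = fs b N.
Proof. induction N; simpl; intros H; auto. rewrite IHN by (intros; apply H; lia). rewrite H by lia. auto. Qed.

Lemma fs_le (a b : nat -> R) N : (forall n, (n < N)%nat -> a n <= b n) -> fs a N <= fs b N.
Proof. induction N; simpl; intros H. lra. assert (a N <= b N) by (apply H; lia).
 assert (fs a N <= fs b N) by (apply IHN; intros; apply H; lia). lra. Qed.

Lemma fs_plus (a b : nat -> R) N : fs (fun n => a n + b n) N = fs a N + fs b N.
Proof. induction N; simpl; lra. Qed.
Lemma fs_scal (c : R) (a : nat -> R) N : fs (fun n => c * a n) N = c * fs a N.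
Proof. induction N; simpl. ring. rewrite IHN. ring. Qed.
Lemma fs_opp (a : nat -> R) N : fs (fun n => - a n) N = - fs a N.
Proof. induction N; simpl; lra. Qed.
Lemma fs_zero (a : nat -> R) N : (forall n, (n < N)%nat -> a n = 0) -> fs a N = 0.
Proof. intros H. rewrite (fs_ext a (fun _ => 0)) by auto. clear. induction N; simpl; lra. Qed.
Lemma fs_nonneg (a : nat -> R) N : (forall n, 0 <= a n) -> 0 <= fs a N.
Proof. intros H; induction N; simpl. lra. specialize (H N). lra. Qed.
Lemma fs_mono (a : nat -> R) N M : (forall n, 0 <= a n) -> (N <= M)%nat -> fs a N <= fs a M.
Proof. intros H HNM. induction HNM. lra. simpl. specialize (H m). lra. Qed.
Lemma fs_collapse (a : nat -> R) M N : (forall n, (M <= n)%nat -> a n = 0) -> (M <= N)%nat -> fs a N = fs a M.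
Proof. intros H HNM. induction HNM. auto. simpl. rewrite H by lia. lra. Qed.

Lemma sum_n_fs (a : nat -> R) N : sum_n a N = fs a (S N).
Proof. induction N. rewrite sum_O. simpl. lra. rewrite sum_Sn, IHN. simpl. reflexivity. Qed.

Lemma is_series_fs (a : nat -> R) l : is_series a l <-> is_lim_seq (fun N => fs a (S N)) l.
Proof. split; intros H.
 - eapply is_lim_seq_ext. intros; apply sum_n_fs. exact H.
 - apply (is_lim_seq_ext (fun N => fs a (S N)) (sum_n a)) in H. exact H. intros; rewrite sum_n_fs; auto. Qed.

Lemma is_series_fin (a : nat -> R) M : (forall n, (M <= n)%nat -> a n = 0) -> is_series a (fs a M).
Proof. intros H. apply is_series_fs. apply is_lim_seq_ext_loc with (fun _ => fs a M).
 exists M. intros n Hn. symmetry. apply fs_collapse; auto. apply is_lim_seq_const. Qed.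

Lemma Series_fin (a : nat -> R) M : (forall n, (M <= n)%nat -> a n = 0) -> Series a = fs a M.
Proof. intros H. apply is_series_unique, is_series_fin, H. Qed.
Lemma ex_series_fin (a : nat -> R) M : (forall n, (M <= n)%nat -> a n = 0) -> ex_series a.
Proof. intros H. eexists. apply is_series_fin, H. Qed.

Lemma Series_partial_le (a : nat -> R) N : (forall n, 0 <= a n) -> ex_series a -> fs a N <= Series a.
Proof. intros H Hex. destruct N. simpl. apply Series_le with (a := fun _ => 0) in Hex.
 rewrite (Series_fin (fun _ => 0) 0) in Hex; auto. intros; split; auto; lra.
 apply Series_correct in Hex. apply is_series_fs in Hex.
 apply (is_lim_seq_incr_compare (fun N => fs a (S N))). auto. intros; simpl; specialize (H (S n)); lra. Qed.

Lemma Series_tail (a : nat -> R) : ex_series a -> forall eps, 0 < eps -> exists M, Series a - fs a M < eps.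
Proof. intros Hex eps Heps. apply Series_correct, is_series_fs in Hex.
 apply is_lim_seq_spec in Hex. destruct (Hex (mkposreal eps Heps)) as [M HM].
 exists (S M). specialize (HM M (le_n _)). simpl in HM. apply Rabs_def2 in HM. simpl. destruct HM. idtac. lra. Qed.

Lemma Series_le_gen (a b : nat -> R) : (forall n, a n <= b n) -> ex_series a -> ex_series b -> Series a <= Series b.
Proof. intros H Ha Hb. apply Series_correct, is_series_fs in Ha. apply Series_correct, is_series_fs in Hb.
 pose proof (is_lim_seq_le _ _ _ _ (fun N => fs_le a b (S N) (fun n _ => H n)) Ha Hb). simpl in H0. auto. Qed.

Lemma Cmod2_nonneg (c : C) : 0 <= Cmod c ^ 2.
Proof. pose proof (Cmod_ge_0 c). nra. Qed.

Lemma Cmod2_add (a b : C) : Cmod (Cplus a b) ^ 2 <= 2 * Cmod a ^ 2 + 2 * Cmod b ^ 2.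
Proof. rewrite !Cmod2_alt. destruct a as [a1 a2], b as [b1 b2]. simpl.
 pose proof (pow2_ge_0 (a1 - b1)). pose proof (pow2_ge_0 (a2 - b2)). nra. Qed.

Lemma im_bound (a b : C) t : 0 < t -> Rabs (Im (Cmult (Cconj a) b)) <= (t * Cmod a ^ 2 + Cmod b ^ 2 / t) / 2.
Proof. intros Ht. rewrite !Cmod2_alt. destruct a as [a1 a2], b as [b1 b2]. simpl.
 assert (E : (t * ((a1 * (a1 * 1)) + (a2 * (a2 * 1))) + ((b1 * (b1 * 1)) + (b2 * (b2*1))) / t) / 2
   = ((t * a1 - b2)^2 + (t*a2 + b1)^2) / (2*t) + (a1 * b2 - a2 * b1)) by (field; lra).
 assert (E2 : (t * ((a1 * (a1 * 1)) + (a2 * (a2 * 1))) + ((b1 * (b1 * 1)) + (b2 * (b2*1))) / t) / 2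
   = ((t * a1 + b2)^2 + (t*a2 - b1)^2) / (2*t) - (a1 * b2 - a2 * b1)) by (field; lra).
 assert (Q1 : 0 <= ((t * a1 - b2)^2 + (t*a2 + b1)^2) / (2*t)) by (unfold Rdiv; apply Rmult_le_pos; [pose proof (pow2_ge_0 (t*a1 - b2)); pose proof (pow2_ge_0 (t*a2+b1)); lra | left; apply Rinv_0_lt_compat; lra]).
 assert (Q2 : 0 <= ((t * a1 + b2)^2 + (t*a2 - b1)^2) / (2*t)) by (unfold Rdiv; apply Rmult_le_pos; [pose proof (pow2_ge_0 (t*a1 + b2)); pose proof (pow2_ge_0 (t*a2-b1)); lra | left; apply Rinv_0_lt_compat; lra]).
 apply Rabs_le. split; lra. Qed.

Lemma re_bound (a b : C) : Rabs (Re (Cmult (Cconj a) b)) <= (Cmod a ^ 2 + Cmod b ^ 2) / 2.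
Proof. rewrite !Cmod2_alt. destruct a as [a1 a2], b as [b1 b2]. simpl.
 pose proof (pow2_ge_0 (a1 - b1)). pose proof (pow2_ge_0 (a2 - b2)).
 pose proof (pow2_ge_0 (a1 + b1)). pose proof (pow2_ge_0 (a2 + b2)). apply Rabs_le; split; nra. Qed.

Lemma im_bound1 (a b : C) : Rabs (Im (Cmult (Cconj a) b)) <= (Cmod a ^ 2 + Cmod b ^ 2) / 2.
Proof. pose proof (im_bound a b 1 Rlt_0_1). replace (Cmod b ^ 2 / 1) with (Cmod b ^ 2) in H by field. lra. Qed.

Lemma exR_scal (c : R) (a : nat -> R) : ex_series a -> ex_series (fun n => c * a n).
Proof. intros H. apply (ex_series_scal_l c) in H. eapply ex_series_ext; [|exact H]. intros; reflexivity. Qed.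
Lemma exR_scal_r (c : R) (a : nat -> R) : ex_series a -> ex_series (fun n => a n * c).
Proof. intros H. apply ex_series_scal_r. auto. Qed.
Lemma exR_plus (a b : nat -> R) : ex_series a -> ex_series b -> ex_series (fun n => a n + b n).
Proof. intros H1 H2. pose proof (ex_series_plus _ _ H1 H2). eapply ex_series_ext; [|exact H]. intros; reflexivity. Qed.
Lemma exR_opp (a : nat -> R) : ex_series a -> ex_series (fun n => - a n).
Proof. intros H1. pose proof (ex_series_opp _ H1). eapply ex_series_ext; [|exact H]. intros; reflexivity. Qed.
Lemma exR_le (a b : nat -> R) : (forall n, Rabs (a n) <= b n) -> ex_series b -> ex_series a.
Proof. intros H1 H2. apply (@ex_series_le R_AbsRing R_CompleteNormedModule a b) ; auto. Qed.

Lemma Series_nonneg (a : nat -> R) : (forall n, 0 <= a n) -> ex_series a -> 0 <= Series a.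
Proof. intros H Hex. apply Series_le with (a := fun _ => 0) in Hex.
 rewrite (Series_fin (fun _ => 0) 0) in Hex; auto. intros; split; auto; lra. Qed.

Lemma nrm2_nonneg x : l2 x -> 0 <= nrm2 x.
Proof. intros H. apply Series_nonneg; auto. intros; apply Cmod2_nonneg. Qed.

Lemma l2_add (a b c : seqC) : (forall n, c n = Cplus (a n) (b n)) -> l2 a -> l2 b ->
  l2 c /\ nrm2 c <= 2 * nrm2 a + 2 * nrm2 b.
Proof. intros Hc Ha Hb.
 assert (Hs : ex_series (fun n => 2 * Cmod (a n) ^ 2 + 2 * Cmod (b n) ^ 2)).
 { apply exR_plus; apply exR_scal; auto. }
 assert (Hl : l2 c).
 { unfold l2. apply exR_le with (2 := Hs). intros n. rewrite Hc.
   rewrite Rabs_pos_eq by apply Cmod2_nonneg. apply Cmod2_add. }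
 split; auto. unfold nrm2. rewrite <- !Series_scal_l. rewrite <- Series_plus.
 apply Series_le. intros n; split. apply Cmod2_nonneg. rewrite Hc; apply Cmod2_add. auto.
 apply exR_scal; auto. apply exR_scal; auto. Qed.

Lemma l2_scal (s : C) (a c : seqC) : (forall n, c n = Cmult s (a n)) -> l2 a -> l2 c /\ nrm2 c = Cmod s ^ 2 * nrm2 a.
Proof. intros Hc Ha. assert (E : forall n, Cmod (c n) ^ 2 = Cmod s ^ 2 * Cmod (a n) ^ 2).
 { intros n. rewrite Hc, Cmod_mult. ring. }
 split. unfold l2. eapply ex_series_ext. intros n; symmetry; apply E. apply exR_scal; auto.
 unfold nrm2. rewrite <- Series_scal_l. apply Series_ext. auto. Qed.

Lemma ex_series_re (a b : seqC) : l2 a -> l2 b -> ex_series (fun n => Re (Cmult (Cconj (a n)) (b n))).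
Proof. intros Ha Hb.
 assert (Hs : ex_series (fun n => (Cmod (a n) ^ 2 + Cmod (b n) ^ 2) / 2)).
 { apply (exR_scal_r (/2)). apply exR_plus; auto. }
 apply exR_le with (2 := Hs). intros n. apply re_bound. Qed.

Lemma ex_series_im (a b : seqC) : l2 a -> l2 b -> ex_series (fun n => Im (Cmult (Cconj (a n)) (b n))).
Proof. intros Ha Hb.
 assert (Hs : ex_series (fun n => (Cmod (a n) ^ 2 + Cmod (b n) ^ 2) / 2)).
 { apply (exR_scal_r (/2)). apply exR_plus; auto. }
 apply exR_le with (2 := Hs). intros n. apply im_bound1. Qed.

Lemma im_series_bound (a b : seqC) t : 0 < t -> l2 a -> l2 b ->
  Rabs (Series (fun n => Im (Cmult (Cconj (a n)) (b n)))) <= (t * nrm2 a + nrm2 b / t) / 2.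
Proof. intros Ht Ha Hb. unfold nrm2.
 assert (Hs : ex_series (fun n => (t * Cmod (a n) ^ 2 + Cmod (b n) ^ 2 / t) / 2)).
 { apply (exR_scal_r (/2)). apply exR_plus.
   apply exR_scal; auto. apply (exR_scal_r (/t)); auto. }
 replace ((t * Series (fun n => Cmod (a n) ^ 2) + Series (fun n => Cmod (b n) ^ 2) / t) / 2)
   with (Series (fun n => (t * Cmod (a n) ^ 2 + Cmod (b n) ^ 2 / t) / 2)).
 2:{ unfold Rdiv. rewrite Series_scal_r, Series_plus, Series_scal_l, Series_scal_r. auto.
     apply exR_scal; auto. apply (exR_scal_r (/t)); auto. }
 apply Rabs_le. pose proof (ex_series_im a b Ha Hb). split.
 - rewrite <- Series_opp. apply Series_le_gen; auto. intros n. pose proof (im_bound (a n) (b n) t Ht).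
   apply Rabs_le_between in H0. lra. apply exR_opp. auto.
 - apply Series_le_gen; auto. intros n. pose proof (im_bound (a n) (b n) t Ht).
   apply Rabs_le_between in H0. lra. Qed.

Fixpoint rp (a m : nat) : R := match m with O => 1 | S m => rp a m * INR (a + m) end.

Lemma rp_S a m : rp a (S m) = INR a * rp (S a) m.
Proof. revert a. induction m; intros a. cbn [rp]. rewrite Nat.add_0_r. ring.
 change (rp a (S (S m))) with (rp a (S m) * INR (a + S m)). rewrite IHm.
 change (rp (S a) (S m)) with (rp (S a) m * INR (S a + m)).
 replace (a + S m)%nat with (S a + m)%nat by lia. ring. Qed.

Lemma rp_nonneg a m : 0 <= rp a m.
Proof. induction m; simpl. lra. apply Rmult_le_pos; auto. apply pos_INR. Qed.

Lemma rp_bound a m : rp a m <= INR (a + m) ^ m.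
Proof. induction m. cbn. lra. change (rp a (S m)) with (rp a m * INR (a+m)).
 replace (INR (a + S m) ^ S m) with (INR (a + S m) ^ m * INR (a + S m)) by (simpl; ring).
 apply Rmult_le_compat. apply rp_nonneg. apply pos_INR.
 eapply Rle_trans. apply IHm. apply pow_incr. split. apply pos_INR. apply le_INR; lia.
 apply le_INR; lia. Qed.

Lemma Cconj_R (r : R) : Cconj (RtoC r) = RtoC r.
Proof. unfold Cconj, RtoC. simpl. f_equal. ring. Qed.

Lemma iter_ann p (u : seqC) n : Nat.iter p ann u n = Cmult (RtoC (sqrt (rp (S n) p))) (u (n + p)%nat).
Proof. revert n. induction p; intros n. cbn [Nat.iter rp]. rewrite sqrt_1, Nat.add_0_r. symmetry; apply Cmult_1_l.
 change (Nat.iter (S p) ann u) with (ann (Nat.iter p ann u)). unfold ann at 1. rewrite IHp. rewrite rp_S, sqrt_mult_alt by apply pos_INR.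
 replace (S n + p)%nat with (n + S p)%nat by lia. rewrite RtoC_mult. ring. Qed.

Lemma iter_cre m (v : seqC) n :
  ((m <= n)%nat -> Nat.iter m cre v n = Cmult (RtoC (sqrt (rp (n - m + 1) m))) (v (n - m)%nat)) /\
  ((n < m)%nat -> Nat.iter m cre v n = RtoC 0).
Proof. revert n. induction m; intros n. cbn [Nat.iter rp]. split; intros H. rewrite sqrt_1, Nat.sub_0_r. symmetry; apply Cmult_1_l. lia.
 change (Nat.iter (S m) cre v) with (cre (Nat.iter m cre v)).
 destruct n as [|n]. split; intros H. lia. reflexivity.
 destruct (IHm n) as [IH1 IH2]. split; intros H.
 - unfold cre at 1. rewrite IH1 by lia. replace (S n - S m)%nat with (n - m)%nat by lia.
   replace (S n - S m + 1)%nat with (n - m + 1)%nat by lia.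
   change (rp (n - m + 1) (S m)) with (rp (n - m + 1) m * INR (n - m + 1 + m)).
   replace (S n) with (n + 1)%nat by lia.
   replace (rp (n - m + 1) m * INR (n - m + 1 + m)) with (INR (n+1) * rp (n - m + 1) m).
   rewrite sqrt_mult_alt by apply pos_INR. rewrite RtoC_mult. ring.
   replace (n - m + 1 + m)%nat with (n + 1)%nat by lia. ring.
 - unfold cre at 1. rewrite IH2 by lia. ring. Qed.

Definition cf (m p n : nat) : R := sqrt (rp (n - m + 1) m) * sqrt (rp (n - m + 1) p).

Definition T (m p : nat) (u : seqC) (n : nat) : C := Nat.iter m cre (Nat.iter p ann u) n.

Lemma T_form m p u n : T m p u n =
  if Nat.leb m n then Cmult (RtoC (cf m p n)) (u (n - m + p)%nat) else RtoC 0.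
Proof. unfold T. destruct (Nat.leb_spec m n) as [H|H].
 - destruct (iter_cre m (Nat.iter p ann u) n) as [H1 _]. rewrite H1 by auto. rewrite iter_ann.
   unfold cf. rewrite RtoC_mult. replace (S (n - m)) with (n - m + 1)%nat by lia. ring.
 - destruct (iter_cre m (Nat.iter p ann u) n) as [_ H1]. auto. Qed.

Lemma cf_nonneg m p n : 0 <= cf m p n.
Proof. unfold cf. apply Rmult_le_pos; apply sqrt_pos. Qed.

Lemma cf_sq m p n : cf m p n ^ 2 = rp (n - m + 1) m * rp (n - m + 1) p.
Proof. unfold cf. rewrite Rpow_mult_distr, !pow2_sqrt by apply rp_nonneg. auto. Qed.

Lemma cf_bound m p n K : (m <= n)%nat -> (p <= K)%nat -> cf m p n ^ 2 <= INR (n + K + 1) ^ (m + p).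
Proof. intros H1 H2. rewrite cf_sq, pow_add. apply Rmult_le_compat; try apply rp_nonneg.
 eapply Rle_trans. apply rp_bound. apply pow_incr. split. apply pos_INR. apply le_INR; lia.
 eapply Rle_trans. apply rp_bound. apply pow_incr. split. apply pos_INR. apply le_INR; lia. Qed.

Lemma cf_sym k l j : (l <= j)%nat -> (l <= k)%nat -> cf k l (j + (k - l)) = cf l k j.
Proof. intros H1 H2. unfold cf. replace (j + (k - l) - k + 1)%nat with (j - l + 1)%nat by lia. ring. Qed.

Fixpoint cs (a : nat -> C) (N : nat) : C :=
  match N with O => RtoC 0 | S N => Cplus (cs a N) (a N) end.

Lemma cs_ext (a b : nat -> C) N : (forall n, (n < N)%nat -> a n = b n) -> cs a N = cs b N.
Proof. induction N; simpl; intros H; auto. rewrite IHN by (intros; apply H; lia). rewrite H by lia. auto. Qed.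
Lemma cs_plus (a b : nat -> C) N : cs (fun n => Cplus (a n) (b n)) N = Cplus (cs a N) (cs b N).
Proof. induction N; simpl. rewrite Cplus_0_l. auto. rewrite IHN. ring. Qed.
Lemma cs_zero (a : nat -> C) N : (forall n, (n < N)%nat -> a n = RtoC 0) -> cs a N = RtoC 0.
Proof. intros H. rewrite (cs_ext a (fun _ => RtoC 0)) by auto. clear. induction N; simpl; auto. rewrite IHN. ring. Qed.
Lemma cs_collapse (a : nat -> C) M N : (forall n, (M <= n)%nat -> a n = RtoC 0) -> (M <= N)%nat -> cs a N = cs a M.
Proof. intros H HNM. induction HNM. auto. simpl. rewrite H by lia. rewrite IHHNM. ring. Qed.
Lemma cs_re_im (a : nat -> C) N : cs a N = (fs (fun n => Re (a n)) N, fs (fun n => Im (a n)) N).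
Proof. induction N; simpl. reflexivity. rewrite IHN. destruct (a N). reflexivity. Qed.
Lemma cs_conj (a : nat -> C) N : Cconj (cs a N) = cs (fun n => Cconj (a n)) N.
Proof. induction N; simpl. apply Cconj_R. rewrite Cplus_conj, IHN. auto. Qed.

Lemma shift_eq (K L N : nat) (h : nat -> C) : (L <= K)%nat ->
  cs (fun n => if Nat.leb K n then h (n - (K - L))%nat else RtoC 0) (N + (K - L)) =
  cs (fun j => if Nat.leb L j then h j else RtoC 0) N.
Proof. intros HLK. induction N.
 - simpl. apply cs_zero. intros n Hn. destruct (Nat.leb_spec K n); auto. lia.
 - replace (S N + (K - L))%nat with (S (N + (K - L))) by lia. simpl. rewrite IHN. f_equal.
   destruct (Nat.leb_spec K (N + (K - L))), (Nat.leb_spec L N); try lia; auto.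
   f_equal. lia. Qed.

Lemma Series_re_fin (a b : seqC) L : (forall n, (L <= n)%nat -> a n = RtoC 0) ->
  inner a b = cs (fun n => Cmult (Cconj (a n)) (b n)) L.
Proof. intros H. unfold inner. rewrite cs_re_im.
 rewrite (Series_fin _ L), (Series_fin (fun n => Im _) L). reflexivity.
 intros n Hn; rewrite H by auto; rewrite Cconj_R, Cmult_0_l; reflexivity.
 intros n Hn; rewrite H by auto; rewrite Cconj_R, Cmult_0_l; reflexivity. Qed.

Section Op.
Variables (k l : nat) (xi : C) (f : nat -> R).
Hypothesis Hlk : (l < k)%nat.
Local Notation d := (k - l)%nat.

Definition Bop (u : seqC) (n : nat) : C := Cplus (Cmult xi (T k l u n)) (Cmult (Cconj xi) (T l k u n)).

Lemma A_dec x n : op_A k l xi f x n = Cplus (Bop x n) (Cmult (RtoC (f n)) (x n)).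
Proof. reflexivity. Qed.

Lemma Bop_form u n : Bop u n =
  Cplus (Cmult xi (if Nat.leb k n then Cmult (RtoC (cf k l n)) (u (n - d)%nat) else RtoC 0))
        (Cmult (Cconj xi) (if Nat.leb l n then Cmult (RtoC (cf l k n)) (u (n + d)%nat) else RtoC 0)).
Proof. unfold Bop. rewrite !T_form. destruct (Nat.leb_spec k n), (Nat.leb_spec l n); try lia;
 repeat (f_equal; try lia). Qed.

Lemma Bop_ext a b n : (forall m, a m = b m) -> Bop a n = Bop b n.
Proof. intros H. rewrite !Bop_form. rewrite !H. auto. Qed.

Lemma Bop_sub a b n : Bop (fun m => Cminus (a m) (b m)) n = Cminus (Bop a n) (Bop b n).
Proof. rewrite !Bop_form. destruct (Nat.leb k n), (Nat.leb l n); ring. Qed.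

Lemma Bop_opp a n : Bop (fun m => Copp (a m)) n = Copp (Bop a n).
Proof. rewrite !Bop_form. destruct (Nat.leb k n), (Nat.leb l n); ring. Qed.

Lemma Bop_supp u M : (forall m, (M <= m)%nat -> u m = RtoC 0) ->
  forall n, (M + d <= n)%nat -> Bop u n = RtoC 0.
Proof. intros H n Hn. rewrite Bop_form. rewrite !H by lia.
 destruct (Nat.leb k n), (Nat.leb l n); ring. Qed.

Lemma A_supp u M : (forall m, (M <= m)%nat -> u m = RtoC 0) ->
  forall n, (M + d <= n)%nat -> op_A k l xi f u n = RtoC 0.
Proof. intros H n Hn. rewrite A_dec, (Bop_supp u M H n Hn), H by lia. ring. Qed.

Lemma Sym x y M : (forall m, (M <= m)%nat -> x m = RtoC 0) -> (forall m, (M <= m)%nat -> y m = RtoC 0) ->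
  cs (fun n => Cmult (Cconj (op_A k l xi f x n)) (y n)) (M + d) =
  cs (fun n => Cmult (Cconj (x n)) (op_A k l xi f y n)) (M + d).
Proof. intros Hx Hy.
 set (h1 := fun j => Cmult (Cmult (Cconj xi) (RtoC (cf l k j))) (Cmult (Cconj (x j)) (y (j + d)%nat))).
 set (h2 := fun j => Cmult (Cmult xi (RtoC (cf l k j))) (Cmult (Cconj (x (j + d)%nat)) (y j))).
 set (D := fun n => Cmult (RtoC (f n)) (Cmult (Cconj (x n)) (y n))).
 transitivity (Cplus (Cplus (cs (fun n => if Nat.leb k n then h1 (n - d)%nat else RtoC 0) (M + d))
                            (cs (fun j => if Nat.leb l j then h2 j else RtoC 0) (M + d))) (cs D (M + d))).
 { rewrite <- !cs_plus. apply cs_ext. intros n _. rewrite A_dec, Bop_form. unfold h1, h2, D.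
   destruct (Nat.leb_spec k n), (Nat.leb_spec l n); try lia;
   rewrite ?Cplus_conj, ?Cmult_conj, ?Cconj_R, ?Cconj_conj.
   - rewrite <- (cf_sym k l (n - d)) by lia. replace (n - d + d)%nat with n by lia. ring.
   - ring.
   - ring. }
 transitivity (Cplus (Cplus (cs (fun j => if Nat.leb l j then h1 j else RtoC 0) (M + d))
                            (cs (fun n => if Nat.leb k n then h2 (n - d)%nat else RtoC 0) (M + d))) (cs D (M + d))).
 { f_equal. f_equal.
   - rewrite shift_eq by lia. symmetry. apply cs_collapse; [|lia].
     intros n Hn. destruct (Nat.leb l n); auto. unfold h1. rewrite Hx by lia. rewrite Cconj_R. ring.
   - rewrite shift_eq by lia. apply cs_collapse; [|lia].
     intros n Hn. destruct (Nat.leb l n); auto. unfold h2. rewrite Hy by lia. ring. }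
 rewrite <- !cs_plus. apply cs_ext. intros n _. rewrite A_dec, Bop_form. unfold h1, h2, D.
 destruct (Nat.leb_spec k n), (Nat.leb_spec l n); try lia.
 - rewrite <- (cf_sym k l (n - d)) by lia. replace (n - d + d)%nat with n by lia. ring.
 - ring.
 - ring. Qed.

End Op.

Lemma R1 (a : nat -> R) (K D N : nat) : (forall n, 0 <= a n) -> (D <= K)%nat ->
  fs (fun n => if Nat.leb K n then a (n - D)%nat else 0) N <= fs a N.
Proof. intros Ha HDK. apply Rle_trans with (fs a (N - D)); [|apply fs_mono; auto; lia].
 induction N. simpl. lra. cbn [fs]. destruct (Nat.leb_spec K N).
 - replace (S N - D)%nat with (S (N - D)) by lia. cbn [fs]. lra.
 - pose proof (fs_mono a (N - D) (S N - D) Ha ltac:(lia)). lra. Qed.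

Lemma R2 (a : nat -> R) (D N : nat) : (forall n, 0 <= a n) ->
  fs (fun n => a (n + D)%nat) N <= fs a (N + D).
Proof. intros Ha. induction N. simpl. apply fs_nonneg; auto.
 replace (S N + D)%nat with (S (N + D)) by lia. simpl. lra. Qed.

Lemma le_sqrt_of_sq c q : 0 <= c -> c ^ 2 <= q -> c <= sqrt q.
Proof. intros H1 H2. rewrite <- (sqrt_pow2 c H1). apply sqrt_le_1_alt. auto. Qed.

Lemma amgm3 X Y c s1 s2 : 0 <= X -> 0 <= Y -> 0 <= c -> c <= s1 -> c <= s2 ->
  X * (c * Y) <= (s1 * X ^ 2 + s2 * Y ^ 2) / 2.
Proof. intros. pose proof (pow2_ge_0 (X - Y)). assert (0 <= c * (X - Y)^2) by (apply Rmult_le_pos; auto).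
 assert ((s1 - c) * X ^ 2 >= 0). { apply Rle_ge, Rmult_le_pos. lra. apply pow2_ge_0. }
 assert ((s2 - c) * Y ^ 2 >= 0). { apply Rle_ge, Rmult_le_pos. lra. apply pow2_ge_0. }
 nra. Qed.

Lemma re_conj_bound (a b : C) : - (Cmod a * Cmod b) <= Re (Cmult (Cconj a) b).
Proof. pose proof (re_le_Cmod (Cmult (Cconj a) b)). rewrite Cmod_mult, Cmod_conj in H.
 apply Rabs_le_between in H. lra. Qed.

Section Est.
Variables (k l : nat) (xi : C).
Hypothesis Hlk : (l < k)%nat.
Local Notation d := (k - l)%nat.

Definition Q (j : nat) : R := INR (j + (2 * k + 1)) ^ (k + l).

Lemma Q_nonneg j : 0 <= Q j.
Proof. apply pow_le, pos_INR. Qed.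
Lemma Q_mono i j : (i <= j)%nat -> Q i <= Q j.
Proof. intros H. apply pow_incr. split. apply pos_INR. apply le_INR; lia. Qed.

Lemma coef1 n : (k <= n)%nat -> cf k l n ^ 2 <= Q n /\ cf k l n ^ 2 <= Q (n - d).
Proof. intros H. pose proof (cf_bound k l n k H ltac:(lia)). split; eapply Rle_trans; eauto;
 apply pow_incr; split; try apply pos_INR; apply le_INR; lia. Qed.

Lemma coef2 n : (l <= n)%nat -> cf l k n ^ 2 <= Q n /\ cf l k n ^ 2 <= Q (n + d).
Proof. intros H. pose proof (cf_bound l k n k H (Nat.le_refl _)). rewrite (Nat.add_comm l k) in H0.
 split; eapply Rle_trans; eauto; apply pow_incr; split; try apply pos_INR; apply le_INR; lia. Qed.

Lemma Cmod_ifc (b : bool) (c : R) (z : C) : 0 <= c ->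
  Cmod (if b then Cmult (RtoC c) z else RtoC 0) = if b then c * Cmod z else 0.
Proof. intros Hc. destruct b. rewrite Cmod_mult, Cmod_R, Rabs_pos_eq; auto. apply Cmod_0. Qed.

Lemma E1_pt (u : seqC) n : Cmod (Bop k l xi u n) ^ 2 <=
  2 * Cmod xi ^ 2 * ((if Nat.leb k n then Q (n - d)%nat * Cmod (u (n - d)%nat) ^ 2 else 0)
                      + Q (n + d)%nat * Cmod (u (n + d)%nat) ^ 2).
Proof. rewrite Bop_form by auto. eapply Rle_trans. apply Cmod2_add. rewrite !Cmod_mult, Cmod_conj.
 rewrite !Cmod_ifc by apply cf_nonneg.
 assert (H1 : (if Nat.leb k n then cf k l n * Cmod (u (n - d)%nat) else 0) ^ 2 <=
              (if Nat.leb k n then Q (n - d)%nat * Cmod (u (n - d)%nat) ^ 2 else 0)).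
 { destruct (Nat.leb_spec k n). rewrite Rpow_mult_distr. apply Rmult_le_compat_r. apply Cmod2_nonneg.
   apply coef1; auto. simpl; lra. }
 assert (H2 : (if Nat.leb l n then cf l k n * Cmod (u (n + d)%nat) else 0) ^ 2 <=
              Q (n + d)%nat * Cmod (u (n + d)%nat) ^ 2).
 { destruct (Nat.leb_spec l n). rewrite Rpow_mult_distr. apply Rmult_le_compat_r. apply Cmod2_nonneg.
   apply coef2; auto. simpl. rewrite Rmult_0_l. apply Rmult_le_pos. apply Q_nonneg. apply Cmod2_nonneg. }
 rewrite !Rpow_mult_distr. pose proof (Cmod2_nonneg xi). nra. Qed.

Lemma E1 (u : seqC) N : fs (fun n => Cmod (Bop k l xi u n) ^ 2) N <=
  fs (fun j => 4 * Cmod xi ^ 2 * Q j * Cmod (u j) ^ 2) (N + d).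
Proof. set (h := fun j => Q j * Cmod (u j) ^ 2).
 assert (Hh : forall j, 0 <= h j) by (intros; apply Rmult_le_pos; [apply Q_nonneg|apply Cmod2_nonneg]).
 eapply Rle_trans. apply fs_le. intros n _. apply E1_pt.
 rewrite (fs_ext _ (fun n => 2 * Cmod xi ^ 2 * ((if Nat.leb k n then h (n - d)%nat else 0) + h (n + d)%nat))).
 2:{ intros n _. unfold h. destruct (Nat.leb k n); auto. }
 rewrite fs_scal, fs_plus. rewrite (fs_ext (fun j => 4 * Cmod xi ^ 2 * Q j * Cmod (u j) ^ 2) (fun j => (4 * Cmod xi ^ 2) * h j)).
 2:{ intros; unfold h; ring. }
 rewrite fs_scal. pose proof (R1 h k d N Hh ltac:(lia)). pose proof (R2 h d N Hh).
 pose proof (fs_mono h N (N + d) Hh ltac:(lia)). pose proof (Cmod2_nonneg xi). nra. Qed.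

Lemma P1_pt (x : seqC) n : let g := fun j => sqrt (Q j) * Cmod (x j) ^ 2 in
  - (Cmod xi / 2) * (2 * g n + (if Nat.leb k n then g (n - d)%nat else 0) + g (n + d)%nat)
  <= Re (Cmult (Cconj (x n)) (Bop k l xi x n)).
Proof. intros g. eapply Rle_trans; [|apply re_conj_bound].
 assert (Hg : forall j, 0 <= g j) by (intros; apply Rmult_le_pos; [apply sqrt_pos|apply Cmod2_nonneg]).
 set (P := if Nat.leb k n then cf k l n * Cmod (x (n - d)%nat) else 0).
 set (P' := if Nat.leb l n then cf l k n * Cmod (x (n + d)%nat) else 0).
 assert (HB : Cmod (Bop k l xi x n) <= Cmod xi * P + Cmod xi * P').
 { rewrite Bop_form by auto. eapply Rle_trans; [apply Cmod_triangle|].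
   rewrite !Cmod_mult, Cmod_conj, !Cmod_ifc by apply cf_nonneg. unfold P, P'. lra. }
 assert (H1 : Cmod (x n) * P <= (g n + (if Nat.leb k n then g (n - d)%nat else 0)) / 2).
 { unfold P. destruct (Nat.leb_spec k n).
   - destruct (coef1 n H). unfold g. apply amgm3; try apply Cmod_ge_0; try apply cf_nonneg;
     apply le_sqrt_of_sq; auto; apply cf_nonneg.
   - rewrite Rmult_0_r. specialize (Hg n). lra. }
 assert (H2 : Cmod (x n) * P' <= (g n + g (n + d)%nat) / 2).
 { unfold P'. destruct (Nat.leb_spec l n).
   - destruct (coef2 n H). unfold g. apply amgm3; try apply Cmod_ge_0; try apply cf_nonneg;
     apply le_sqrt_of_sq; auto; apply cf_nonneg.
   - rewrite Rmult_0_r. pose proof (Hg n). pose proof (Hg (n + d)%nat). lra. }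
 pose proof (Cmod_ge_0 (x n)). pose proof (Cmod_ge_0 xi).
 assert (H4 : Cmod (x n) * Cmod (Bop k l xi x n) <= Cmod xi * (Cmod (x n) * P) + Cmod xi * (Cmod (x n) * P')).
 { eapply Rle_trans. apply Rmult_le_compat_l; [auto|apply HB]. lra. }
 assert (H5 : Cmod xi * (Cmod (x n) * P) <= Cmod xi * ((g n + (if Nat.leb k n then g (n - d)%nat else 0)) / 2))
   by (apply Rmult_le_compat_l; auto).
 assert (H6 : Cmod xi * (Cmod (x n) * P') <= Cmod xi * ((g n + g (n + d)%nat) / 2))
   by (apply Rmult_le_compat_l; auto).
 lra. Qed.

Lemma P1_sum (x : seqC) N :
  - (2 * Cmod xi) * fs (fun j => sqrt (Q j) * Cmod (x j) ^ 2) (N + d)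
  <= fs (fun n => Re (Cmult (Cconj (x n)) (Bop k l xi x n))) N.
Proof. set (g := fun j => sqrt (Q j) * Cmod (x j) ^ 2).
 assert (Hg : forall j, 0 <= g j) by (intros; apply Rmult_le_pos; [apply sqrt_pos|apply Cmod2_nonneg]).
 apply Rle_trans with (fs (fun n => - (Cmod xi / 2) * ((2 * g n + (if Nat.leb k n then g (n - d)%nat else 0)) + g (n + d)%nat)) N).
 2:{ apply fs_le. intros n _. apply (P1_pt x n). }
 rewrite fs_scal, !fs_plus, fs_scal.
 pose proof (R1 g k d N Hg ltac:(lia)). pose proof (R2 g d N Hg).
 pose proof (fs_mono g N (N + d) Hg ltac:(lia)). pose proof (fs_nonneg g N Hg). pose proof (Cmod_ge_0 xi). nra. Qed.

End Est.

Lemma bern x p : 0 <= x <= 1 -> (1 + x) ^ p <= 1 + x * (INR p * 2 ^ p).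
Proof. intros Hx. induction p. simpl. lra.
 rewrite S_INR. change ((1 + x) ^ S p) with ((1 + x) * (1 + x) ^ p). change (2 ^ S p) with (2 * 2 ^ p).
 pose proof (pow_R1_Rle 2 p ltac:(lra)). pose proof (pos_INR p).
 assert (0 <= x * x * (INR p * 2 ^ p)) by (apply Rmult_le_pos; [nra| apply Rmult_le_pos; lra]).
 assert (x * x * (INR p * 2 ^ p) <= x * (INR p * 2 ^ p)).
 { apply Rmult_le_compat_r. apply Rmult_le_pos; lra. nra. }
 apply Rle_trans with ((1 + x) * (1 + x * (INR p * 2 ^ p))). apply Rmult_le_compat_l; lra. nra. Qed.

Lemma asym s p eta : 0 < eta -> exists J0, forall j, (J0 <= j)%nat -> INR (j + s) ^ p <= (1 + eta) * INR j ^ p.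
Proof. intros Heta. set (C := INR s * (INR p * 2 ^ p)).
 destruct (INR_archimed eta C Heta) as [n Hn]. exists (n + s + 1)%nat. intros j Hj.
 assert (Hj0 : 0 < INR j) by (apply lt_0_INR; lia).
 assert (Hsj : INR s <= INR j) by (apply le_INR; lia).
 assert (Hnj : INR n <= INR j) by (apply le_INR; lia).
 set (x := INR s / INR j).
 assert (Hx : 0 <= x <= 1). { unfold x. split. apply Rmult_le_pos. apply pos_INR. left; apply Rinv_0_lt_compat; auto.
   apply Rmult_le_reg_r with (INR j); auto. field_simplify; lra. }
 assert (E : INR (j + s) = INR j * (1 + x)) by (unfold x; rewrite plus_INR; field; lra).
 rewrite E, Rpow_mult_distr. rewrite Rmult_comm. apply Rmult_le_compat_r. apply pow_le; lra.
 eapply Rle_trans. apply bern; auto.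
 assert (x * (INR p * 2 ^ p) = C / INR j) by (unfold x, C; field; lra). rewrite H.
 assert (C / INR j <= eta). { apply Rmult_le_reg_r with (INR j); auto. field_simplify; try lra.
   assert (INR n * eta <= INR j * eta) by (apply Rmult_le_compat_r; lra). lra. }
 lra. Qed.

Lemma consts k l xi (f : nat -> R) : (l < k)%nat -> (forall n, 0 <= f n) ->
  (exists (kappa : R) (N : nat), 2 < kappa /\ forall n : nat, (N <= n)%nat ->
       kappa * Cmod xi * sqrt (INR n ^ (k + l)) <= f n) ->
  exists al be, 0 < al < 1 /\ 0 <= be /\ forall j, 4 * Cmod xi ^ 2 * Q k l j <= al * f j ^ 2 + be.
Proof. intros Hlk Hf [kappa [N [Hk HN]]].
 set (eta := (kappa ^ 2 - 4) / 8). assert (Heta : 0 < eta) by (unfold eta; nra).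
 destruct (asym (2 * k + 1) (k + l) eta Heta) as [J0 HJ0].
 set (J1 := (J0 + N)%nat). set (al := (kappa ^ 2 + 4) / (2 * kappa ^ 2)).
 exists al, (4 * Cmod xi ^ 2 * Q k l J1).
 pose proof (Cmod2_nonneg xi) as Hxi.
 split. { unfold al. split. apply Rdiv_lt_0_compat; nra. apply Rmult_lt_reg_r with (2 * kappa ^ 2). nra.
   field_simplify; nra. }
 split. { apply Rmult_le_pos; [lra | apply Q_nonneg]. }
 intros j. destruct (Nat.le_gt_cases J1 j) as [Hj|Hj].
 - assert (H1 : Q k l j <= (1 + eta) * INR j ^ (k + l)) by (apply HJ0; unfold J1 in Hj; lia).
   assert (H2 : kappa * Cmod xi * sqrt (INR j ^ (k + l)) <= f j) by (apply HN; unfold J1 in Hj; lia).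
   assert (Hp : 0 <= INR j ^ (k + l)) by (apply pow_le, pos_INR).
   assert (H3 : 0 <= kappa * Cmod xi * sqrt (INR j ^ (k + l))).
   { apply Rmult_le_pos. apply Rmult_le_pos. lra. apply Cmod_ge_0. apply sqrt_pos. }
   assert (H4 : (kappa * Cmod xi * sqrt (INR j ^ (k + l))) ^ 2 <= f j ^ 2) by (apply pow_incr; lra).
   rewrite !Rpow_mult_distr, pow2_sqrt in H4 by auto.
   assert (E : 4 * (1 + eta) = al * kappa ^ 2) by (unfold al, eta; field; lra).
   assert (0 <= 4 * Cmod xi ^ 2 * Q k l J1) by (apply Rmult_le_pos; [lra | apply Q_nonneg]).
   assert (4 * Cmod xi ^ 2 * Q k l j <= 4 * Cmod xi ^ 2 * ((1 + eta) * INR j ^ (k + l))) by (apply Rmult_le_compat_l; lra).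
   assert (al * (kappa ^ 2 * Cmod xi ^ 2 * INR j ^ (k + l)) <= al * f j ^ 2).
   { apply Rmult_le_compat_l. unfold al. apply Rlt_le, Rdiv_lt_0_compat; nra. lra. }
   assert (4 * Cmod xi ^ 2 * ((1 + eta) * INR j ^ (k + l)) = al * (kappa ^ 2 * Cmod xi ^ 2 * INR j ^ (k + l))).
   { transitivity ((4 * (1 + eta)) * (Cmod xi ^ 2 * INR j ^ (k + l))). ring. rewrite E. ring. }
   assert (0 <= al * f j ^ 2). { apply Rmult_le_pos. unfold al. apply Rlt_le, Rdiv_lt_0_compat; nra. apply pow2_ge_0. }
   lra.
 - assert (Q k l j <= Q k l J1) by (apply Q_mono; lia).
   assert (4 * Cmod xi ^ 2 * Q k l j <= 4 * Cmod xi ^ 2 * Q k l J1) by (apply Rmult_le_compat_l; lra).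
   assert (0 <= al * f j ^ 2). { apply Rmult_le_pos. unfold al. apply Rlt_le, Rdiv_lt_0_compat; nra. apply pow2_ge_0. }
   lra. Qed.

Definition phi_ok (phi : C -> R) : Prop :=
  (forall a b, phi (Cplus a b) = phi a + phi b) /\
  (forall a b t, 0 < t -> Rabs (phi (Cmult (Cconj a) b)) <= (t * Cmod a ^ 2 + Cmod b ^ 2 / t) / 2).

Lemma re_bound_t (a b : C) t : 0 < t -> Rabs (Re (Cmult (Cconj a) b)) <= (t * Cmod a ^ 2 + Cmod b ^ 2 / t) / 2.
Proof. intros Ht. pose proof (im_bound (Cmult Ci a) b t Ht).
 rewrite Cmod_mult in H. replace (Cmod Ci) with 1 in H.
 2:{ unfold Cmod, Ci. simpl. replace (0 * (0 * 1) + 1 * (1 * 1)) with 1 by ring. symmetry; apply sqrt_1. }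
 rewrite Rmult_1_l in H. replace (Im (Cmult (Cconj (Cmult Ci a)) b)) with (- Re (Cmult (Cconj a) b)) in H.
 rewrite Rabs_Ropp in H. auto. destruct a, b. unfold Ci. simpl. ring. Qed.

Lemma phi_re : phi_ok Re.
Proof. split. intros [a1 a2] [b1 b2]; simpl; ring. apply re_bound_t. Qed.
Lemma phi_im : phi_ok Im.
Proof. split. intros [a1 a2] [b1 b2]; simpl; ring. apply im_bound. Qed.

Lemma ex_series_phi phi (a b : seqC) : phi_ok phi -> l2 a -> l2 b -> ex_series (fun n => phi (Cmult (Cconj (a n)) (b n))).
Proof. intros [_ Hb] Ha Hb'.
 assert (Hs : ex_series (fun n => (1 * Cmod (a n) ^ 2 + Cmod (b n) ^ 2 / 1) / 2)).
 { apply (exR_scal_r (/2)). apply exR_plus. apply exR_scal; auto. apply (exR_scal_r (/1)); auto. }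
 apply exR_le with (2 := Hs). intros n. apply Hb. lra. Qed.

Lemma phi_series_bound phi (a b : seqC) t : phi_ok phi -> 0 < t -> l2 a -> l2 b ->
  Rabs (Series (fun n => phi (Cmult (Cconj (a n)) (b n)))) <= (t * nrm2 a + nrm2 b / t) / 2.
Proof. intros Hphi Ht Ha Hb. unfold nrm2.
 assert (Hs : ex_series (fun n => (t * Cmod (a n) ^ 2 + Cmod (b n) ^ 2 / t) / 2)).
 { apply (exR_scal_r (/2)). apply exR_plus.
   apply exR_scal; auto. apply (exR_scal_r (/t)); auto. }
 replace ((t * Series (fun n => Cmod (a n) ^ 2) + Series (fun n => Cmod (b n) ^ 2) / t) / 2)
   with (Series (fun n => (t * Cmod (a n) ^ 2 + Cmod (b n) ^ 2 / t) / 2)).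
 2:{ unfold Rdiv. rewrite Series_scal_r, Series_plus, Series_scal_l, Series_scal_r. auto.
     apply exR_scal; auto. apply (exR_scal_r (/t)); auto. }
 apply Rabs_le. pose proof (ex_series_phi phi a b Hphi Ha Hb). destruct Hphi as [_ Hbd]. split.
 - rewrite <- Series_opp. apply Series_le_gen; auto. intros n. pose proof (Hbd (a n) (b n) t Ht).
   apply Rabs_le_between in H0. lra. apply exR_opp. auto.
 - apply Series_le_gen; auto. intros n. pose proof (Hbd (a n) (b n) t Ht).
   apply Rabs_le_between in H0. lra. Qed.

Lemma Cmod2_sub (a b : C) : Cmod (Cminus a b) ^ 2 <= 2 * Cmod a ^ 2 + 2 * Cmod b ^ 2.
Proof. rewrite !Cmod2_alt. destruct a as [a1 a2], b as [b1 b2]. simpl.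
 pose proof (pow2_ge_0 (a1 + b1)). pose proof (pow2_ge_0 (a2 + b2)). nra. Qed.

Lemma l2_sub (a b : seqC) : l2 a -> l2 b -> l2 (seq_sub a b) /\ nrm2 (seq_sub a b) <= 2 * nrm2 a + 2 * nrm2 b.
Proof. intros Ha Hb.
 assert (Hs : ex_series (fun n => 2 * Cmod (a n) ^ 2 + 2 * Cmod (b n) ^ 2)).
 { apply exR_plus; apply exR_scal; auto. }
 assert (Hl : l2 (seq_sub a b)).
 { unfold l2. apply exR_le with (2 := Hs). intros n. unfold seq_sub.
   rewrite Rabs_pos_eq by apply Cmod2_nonneg. apply Cmod2_sub. }
 split; auto. unfold nrm2. rewrite <- !Series_scal_l. rewrite <- Series_plus.
 apply Series_le. intros n; split. apply Cmod2_nonneg. apply Cmod2_sub. auto.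
 apply exR_scal; auto. apply exR_scal; auto. Qed.

Lemma phi_cont phi (a a' b b' : seqC) delta : phi_ok phi -> l2 a -> l2 a' -> l2 b -> l2 b' ->
  0 < delta <= 1 -> nrm2 (seq_sub a a') <= delta ^ 2 -> nrm2 (seq_sub b b') <= delta ^ 2 ->
  Rabs (Series (fun n => phi (Cmult (Cconj (a n)) (b n))) - Series (fun n => phi (Cmult (Cconj (a' n)) (b' n))))
  <= delta * (2 + nrm2 a + nrm2 b).
Proof. intros Hphi Ha Ha' Hb Hb' Hd Hda Hdb.
 destruct (l2_sub a a' Ha Ha') as [Hsa _]. destruct (l2_sub b b' Hb Hb') as [Hsb _].
 destruct (l2_sub a (seq_sub a a') Ha Hsa) as [_ Ha'n].
 assert (E : forall n, phi (Cmult (Cconj (a n)) (b n)) =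
   phi (Cmult (Cconj (seq_sub a a' n)) (b n)) + phi (Cmult (Cconj (a' n)) (seq_sub b b' n))
   + phi (Cmult (Cconj (a' n)) (b' n))).
 { intros n. destruct Hphi as [Hadd _]. rewrite <- !Hadd. f_equal. unfold seq_sub. rewrite Cminus_conj. ring. }
 rewrite (Series_ext _ _ E). rewrite !Series_plus; try apply exR_plus; try apply ex_series_phi; auto.
 pose proof (phi_series_bound phi (seq_sub a a') b (/ delta) Hphi ltac:(apply Rinv_0_lt_compat; lra) Hsa Hb).
 pose proof (phi_series_bound phi a' (seq_sub b b') delta Hphi ltac:(lra) Ha' Hsb).
 assert (Ea' : forall n, seq_sub a (seq_sub a a') n = a' n) by (intros; unfold seq_sub; ring).
 assert (nrm2 a' <= 2 * nrm2 a + 2 * delta ^ 2).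
 { unfold nrm2 at 1. rewrite (Series_ext _ (fun n => Cmod (seq_sub a (seq_sub a a') n) ^ 2)). fold (nrm2 (seq_sub a (seq_sub a a'))). lra.
   intros; rewrite Ea'; auto. }
 pose proof (nrm2_nonneg a Ha). pose proof (nrm2_nonneg b Hb). pose proof (nrm2_nonneg a' Ha').
 assert (/ delta * nrm2 (seq_sub a a') <= delta).
 { apply Rle_trans with (/ delta * delta ^ 2). apply Rmult_le_compat_l. left; apply Rinv_0_lt_compat; lra. auto.
   right. field. lra. }
 assert (nrm2 (seq_sub b b') / delta <= delta).
 { apply Rle_trans with (delta ^ 2 / delta). apply Rmult_le_compat_r. left; apply Rinv_0_lt_compat; lra. auto.
   right. field. lra. }
 assert (Eb : nrm2 b / / delta = delta * nrm2 b) by (field; lra). rewrite Eb in H.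
 assert (delta * nrm2 a' <= delta * (2 * nrm2 a + 2)).
 { apply Rmult_le_compat_l. lra. pose proof (pow_incr delta 1 2). nra. }
 apply Rabs_le_between in H. apply Rabs_le_between in H0.
 apply Rabs_le. split; nra. Qed.

Lemma zero_of_small D C : 0 <= C -> (forall delta, 0 < delta <= 1 -> Rabs D <= delta * C) -> D = 0.
Proof. intros HC H. destruct (Req_dec D 0) as [|Hne]; auto. exfalso.
 assert (HD : 0 < Rabs D) by (apply Rabs_pos_lt; auto).
 set (delta := Rmin 1 (Rabs D / (2 * (C + 1)))).
 assert (0 < delta <= 1). { unfold delta. split. apply Rmin_glb_lt. lra. apply Rdiv_lt_0_compat; lra. apply Rmin_l. }
 specialize (H delta H0). assert (delta <= Rabs D / (2 * (C + 1))) by apply Rmin_r.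
 assert (delta * C <= Rabs D / (2 * (C + 1)) * C) by (apply Rmult_le_compat_r; lra).
 assert (Rabs D / (2 * (C + 1)) * C < Rabs D).
 { apply Rmult_lt_reg_r with (2 * (C + 1)). lra. field_simplify; try lra. nra. }
 lra. Qed.

Definition supp (M : nat) (s : seqC) : Prop := forall m, (M <= m)%nat -> s m = RtoC 0.

Lemma supp_mono M M' s : supp M s -> (M <= M')%nat -> supp M' s.
Proof. intros H H' m Hm. apply H. lia. Qed.

Lemma Cmod2_0 : Cmod (RtoC 0) ^ 2 = 0.
Proof. rewrite Cmod_0. ring. Qed.

Lemma l2_supp M s : supp M s -> l2 s.
Proof. intros H. apply (ex_series_fin _ M). intros n Hn. rewrite H by auto. apply Cmod2_0. Qed.

Lemma nrm2_supp M L s : supp M s -> (M <= L)%nat -> nrm2 s = fs (fun n => Cmod (s n) ^ 2) L.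
Proof. intros H HL. apply Series_fin. intros n Hn. rewrite H by lia. apply Cmod2_0. Qed.

Lemma nrm2_ext (a b : seqC) : (forall n, a n = b n) -> nrm2 a = nrm2 b.
Proof. intros H. unfold nrm2. apply Series_ext. intros; rewrite H; auto. Qed.

Lemma nrm2_ext2 (a b : seqC) : (forall n, Cmod (a n) = Cmod (b n)) -> nrm2 a = nrm2 b.
Proof. intros H. unfold nrm2. apply Series_ext. intros; rewrite H; auto. Qed.

Lemma sq_le a b : 0 <= a -> 0 <= b -> a ^ 2 <= b ^ 2 -> a <= b.
Proof. intros Ha Hb H. destruct (Rle_lt_dec a b); auto. nra. Qed.

Section Main.
Variables (k l : nat) (xi : C) (f : nat -> R) (al be : R).
Hypothesis Hlk : (l < k)%nat.
Hypothesis Hf : forall n, 0 <= f n.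
Hypothesis Hal : 0 < al < 1.
Hypothesis Hbe : 0 <= be.
Hypothesis Hc : forall j, 4 * Cmod xi ^ 2 * Q k l j <= al * f j ^ 2 + be.
Local Notation A := (op_A k l xi f).
Local Notation d := (k - l)%nat.

Lemma Vbound j : 2 * Cmod xi * sqrt (Q k l j) <= f j + sqrt be.
Proof. pose proof (Hf j). pose proof (sqrt_pos be). pose proof (Cmod_ge_0 xi). pose proof (sqrt_pos (Q k l j)).
 apply sq_le. apply Rmult_le_pos; [lra | auto]. lra.
 rewrite !Rpow_mult_distr, pow2_sqrt by (apply Q_nonneg; auto).
 specialize (Hc j). pose proof (pow2_sqrt be Hbe).
 assert (al * f j ^ 2 <= f j ^ 2). { pose proof (pow2_ge_0 (f j)). nra. }
 assert (0 <= 2 * f j * sqrt be) by (apply Rmult_le_pos; lra).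
 replace ((f j + sqrt be) ^ 2) with (f j ^ 2 + 2 * f j * sqrt be + sqrt be ^ 2) by ring.
 replace (2 ^ 2 * Cmod xi ^ 2 * Q k l j) with (4 * Cmod xi ^ 2 * Q k l j) by ring. lra. Qed.

Lemma A_supp' M x : supp M x -> supp (M + d) (A x).
Proof. intros H n Hn. apply (A_supp k l xi f Hlk x M H n Hn). Qed.

Lemma lowerA x M : supp M x -> Im (inner x (A x)) = 0 /\ - sqrt be * nrm2 x <= Re (inner x (A x)).
Proof. intros Hx. rewrite (Series_re_fin x (A x) (M + d)) by (apply supp_mono with M; auto; lia).
 pose proof (Sym k l xi f Hlk x x M Hx Hx) as Hs.
 set (c := cs (fun n => Cmult (Cconj (x n)) (A x n)) (M + d)) in *.
 assert (Hcc : cs (fun n => Cmult (Cconj (A x n)) (x n)) (M + d) = Cconj c).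
 { unfold c. rewrite cs_conj. apply cs_ext. intros n _. rewrite Cmult_conj, Cconj_conj. ring. }
 split.
 - rewrite Hcc in Hs. destruct c as [c1 c2]. unfold Cconj in Hs. simpl in Hs. injection Hs. simpl. lra.
 - unfold c. rewrite cs_re_im.
   change (Re (?p, ?q)) with p.
   rewrite (fs_ext _ (fun n => Re (Cmult (Cconj (x n)) (Bop k l xi x n)) + f n * Cmod (x n) ^ 2)).
   2:{ intros n _. rewrite A_dec. rewrite Cmod2_alt. destruct (x n), (Bop k l xi x n). simpl. ring. }
   rewrite fs_plus. pose proof (P1_sum k l xi Hlk x (M + d)) as HP.
   set (g := fun j => sqrt (Q k l j) * Cmod (x j) ^ 2) in *.
   assert (Hg0 : forall j, (M <= j)%nat -> g j = 0) by (intros j Hj; unfold g; rewrite Hx by auto; rewrite Cmod2_0; ring).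
   rewrite (fs_collapse g M) in HP by (auto; lia).
   rewrite (fs_collapse (fun n => f n * Cmod (x n) ^ 2) M) by (intros; try rewrite Hx by auto; try rewrite Cmod2_0; try ring; lia).
   rewrite (nrm2_supp M M x Hx (le_n _)).
   assert (fs (fun j => - sqrt be * Cmod (x j) ^ 2) M <= fs (fun j => f j * Cmod (x j) ^ 2 + - (2 * Cmod xi) * g j) M).
   { apply fs_le. intros j _. unfold g. pose proof (Vbound j). pose proof (Cmod2_nonneg (x j)).
     assert (2 * Cmod xi * sqrt (Q k l j) * Cmod (x j) ^ 2 <= (f j + sqrt be) * Cmod (x j) ^ 2) by (apply Rmult_le_compat_r; auto).
     lra. }
   rewrite fs_plus, fs_scal, fs_scal in H. lra. Qed.

Definition den (mu : R) (n : nat) : C := (f n, - mu).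
Definition Rop (mu : R) (s : seqC) (n : nat) : C := Cdiv (s n) (den mu n).
Definition Kop (mu : R) (s : seqC) (n : nat) : C := Bop k l xi (Rop mu s) n.
Definition Amu (mu : R) (x : seqC) (n : nat) : C := Cminus (A x n) (Cmult (0, mu) (x n)).

Lemma den_nz mu n : mu <> 0 -> den mu n <> RtoC 0.
Proof. intros H E. injection E. intros. lra. Qed.

Lemma Cmod2_den mu n : Cmod (den mu n) ^ 2 = f n ^ 2 + mu ^ 2.
Proof. rewrite Cmod2_alt. simpl. ring. Qed.

Lemma Amu_R mu s n : mu <> 0 -> Amu mu (Rop mu s) n = Cplus (Kop mu s n) (s n).
Proof. intros Hmu. unfold Amu, Kop. rewrite A_dec. unfold Rop.
 assert (Hd : Cminus (RtoC (f n)) (0, mu) = den mu n) by (unfold den, RtoC, Cminus, Cplus, Copp; simpl; f_equal; ring).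
 pose proof (den_nz mu n Hmu).
 transitivity (Cplus (Bop k l xi (fun n0 => Cdiv (s n0) (den mu n0)) n) (Cmult (Cminus (RtoC (f n)) (0, mu)) (Cdiv (s n) (den mu n)))).
 ring. rewrite Hd. f_equal. field. auto. Qed.

Lemma Rop_supp mu M s : supp M s -> supp M (Rop mu s).
Proof. intros H m Hm. unfold Rop. rewrite H by auto. unfold Cdiv. apply Cmult_0_l. Qed.

Lemma Kop_supp mu M s : supp M s -> supp (M + d) (Kop mu s).
Proof. intros H n Hn. unfold Kop. apply (Bop_supp k l xi Hlk _ M (Rop_supp mu M s H) n Hn). Qed.

Lemma contr mu M s : mu <> 0 -> be <= al * mu ^ 2 -> supp M s -> nrm2 (Kop mu s) <= al * nrm2 s.
Proof. intros Hmu Hbm Hs.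
 rewrite (nrm2_supp (M + d) (M + d) _ (Kop_supp mu M s Hs) (le_n _)).
 rewrite (nrm2_supp M (M + d + d) s Hs ltac:(lia)).
 eapply Rle_trans. apply (E1 k l xi Hlk). rewrite <- fs_scal. apply fs_le. intros j _.
 unfold Rop. unfold Cdiv. rewrite Cmod_mult, Cmod_inv by (apply den_nz; auto).
 pose proof (Cmod2_den mu j). pose proof (den_nz mu j Hmu). apply Cmod_gt_0 in H0.
 set (D := Cmod (den mu j)) in *. set (S := Cmod (s j)).
 assert (HW : 4 * Cmod xi ^ 2 * Q k l j <= al * D ^ 2).
 { rewrite H. specialize (Hc j). nra. }
 replace ((S * / D) ^ 2) with (S ^ 2 / D ^ 2) by (field; lra).
 assert (0 <= S ^ 2 / D ^ 2). { apply Rmult_le_pos. apply pow2_ge_0. left. apply Rinv_0_lt_compat. nra. }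
 apply Rle_trans with (al * D ^ 2 * (S ^ 2 / D ^ 2)). apply Rmult_le_compat_r; auto.
 right. field. lra. Qed.

Definition trunc (M : nat) (w : seqC) (n : nat) : C := if Nat.ltb n M then w n else RtoC 0.

Lemma trunc_supp M w : supp M (trunc M w).
Proof. intros m Hm. unfold trunc. destruct (Nat.ltb_spec m M); auto. lia. Qed.

Lemma trunc_le M w : l2 w -> nrm2 (trunc M w) <= nrm2 w.
Proof. intros Hw. apply Series_le; auto. intros n. split. apply Cmod2_nonneg. unfold trunc.
 destruct (Nat.ltb n M). lra. rewrite Cmod2_0. apply Cmod2_nonneg. Qed.

Lemma trunc_tail w : l2 w -> forall eps, 0 < eps -> exists M,
  l2 (seq_sub (trunc M w) w) /\ nrm2 (seq_sub (trunc M w) w) < eps.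
Proof. intros Hw eps Heps. destruct (Series_tail _ Hw eps Heps) as [M HM]. exists M.
 set (a := fun n => Cmod (w n) ^ 2). set (hd := fun n => if Nat.ltb n M then a n else 0).
 assert (E : forall n, Cmod (seq_sub (trunc M w) w n) ^ 2 = a n + - hd n).
 { intros n. unfold seq_sub, trunc, hd, a. destruct (Nat.ltb n M).
   replace (Cminus (w n) (w n)) with (RtoC 0) by ring. rewrite Cmod2_0. ring.
   replace (Cminus (RtoC 0) (w n)) with (Copp (w n)) by ring. rewrite Cmod_opp. ring. }
 assert (Hhd : ex_series hd). { apply (ex_series_fin _ M). intros n Hn. unfold hd. destruct (Nat.ltb_spec n M); auto; lia. }
 assert (Hex : ex_series (fun n => a n + - hd n)) by (apply exR_plus; auto; apply exR_opp; auto).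
 split. unfold l2. eapply ex_series_ext; [|exact Hex]. intros; rewrite E; auto.
 unfold nrm2. rewrite (Series_ext _ _ E). rewrite Series_plus, Series_opp; auto. 2: apply exR_opp; auto.
 rewrite (Series_fin hd M). 2:{ intros n Hn. unfold hd. destruct (Nat.ltb_spec n M); auto; lia. }
 rewrite (fs_ext hd a). unfold a. fold (nrm2 w). unfold nrm2 in *. lra.
 intros n Hn. unfold hd. destruct (Nat.ltb_spec n M); auto; lia. Qed.

Fixpoint Sq (mu : R) (w0 : seqC) (J : nat) : seqC :=
  match J with O => w0 | S J => fun n => Cminus (w0 n) (Kop mu (Sq mu w0 J) n) end.

Definition Ed (mu : R) (w0 : seqC) (J : nat) (n : nat) : C :=
  Cminus (Cplus (Sq mu w0 J n) (Kop mu (Sq mu w0 J) n)) (w0 n).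

Lemma Sq_supp mu M w0 : supp M w0 -> forall J, supp (M + J * d) (Sq mu w0 J).
Proof. intros H J. induction J. simpl. apply supp_mono with M; auto; nia.
 intros n Hn. simpl. rewrite H by nia. rewrite (Kop_supp mu (M + J * d) _ IHJ) by (simpl in Hn; nia). ring. Qed.

Lemma Ed_supp mu M w0 J : supp M w0 -> supp (M + S J * d) (Ed mu w0 J).
Proof. intros H n Hn. unfold Ed. rewrite (Sq_supp mu M w0 H J n) by (simpl in Hn; nia).
 rewrite H by nia. rewrite (Kop_supp mu (M + J * d) _ (Sq_supp mu M w0 H J)) by (simpl in Hn; nia). ring. Qed.

Lemma Ed_S mu w0 J n : mu <> 0 -> Ed mu w0 (S J) n = Copp (Kop mu (Ed mu w0 J) n).
Proof. intros Hmu.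
 assert (E1' : Cminus (Kop mu (Sq mu w0 (S J)) n) (Kop mu (Sq mu w0 J) n) = Copp (Kop mu (Ed mu w0 J) n)).
 { unfold Kop. rewrite <- (Bop_sub k l xi Hlk). rewrite <- (Bop_opp k l xi Hlk). apply (Bop_ext k l xi Hlk). intros m. unfold Rop, Ed. simpl.
   pose proof (den_nz mu m Hmu). field. auto. }
 rewrite <- E1'. unfold Ed. simpl. ring. Qed.

Lemma Ed_bound mu M w0 : mu <> 0 -> be <= al * mu ^ 2 -> supp M w0 ->
  forall J, nrm2 (Ed mu w0 J) <= al ^ (S J) * nrm2 w0.
Proof. intros Hmu Hbm Hw J. induction J.
 - rewrite (nrm2_ext _ (Kop mu w0)). simpl. rewrite Rmult_1_r. apply (contr mu M); auto.
   intros n. unfold Ed. simpl. ring.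
 - rewrite (nrm2_ext2 _ (Kop mu (Ed mu w0 J))). eapply Rle_trans. apply (contr mu (M + S J * d)); auto.
   apply Ed_supp; auto. change (al ^ S (S J)) with (al * al ^ S J). rewrite Rmult_assoc.
   apply Rmult_le_compat_l; lra.
   intros n. rewrite Ed_S, Cmod_opp; auto. Qed.

Lemma dens mu w : mu <> 0 -> be <= al * mu ^ 2 -> l2 w -> forall eps, 0 < eps ->
  exists x M, supp M x /\ nrm2 (seq_sub (Amu mu x) w) < eps.
Proof. intros Hmu Hbm Hw eps Heps.
 destruct (trunc_tail w Hw (eps / 4) ltac:(lra)) as [M0 [Htl Htn]].
 set (wM := trunc M0 w). pose proof (trunc_le M0 w Hw) as Hle. fold wM in Hle.
 pose proof (nrm2_nonneg w Hw) as Hw0.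
 set (y := eps / (4 * (nrm2 w + 1))).
 assert (Hy : 0 < y) by (unfold y; apply Rdiv_lt_0_compat; lra).
 destruct (pow_lt_1_zero al ltac:(rewrite Rabs_pos_eq; lra) y Hy) as [N0 HN0].
 specialize (HN0 (S N0) ltac:(lia)). rewrite Rabs_pos_eq in HN0 by (apply pow_le; lra).
 exists (Rop mu (Sq mu wM N0)), (M0 + N0 * d)%nat. split.
 apply Rop_supp, Sq_supp, trunc_supp.
 assert (E : forall n, seq_sub (Amu mu (Rop mu (Sq mu wM N0))) w n = Cplus (Ed mu wM N0 n) (seq_sub wM w n)).
 { intros n. unfold seq_sub. rewrite Amu_R by auto. unfold Ed. ring. }
 assert (HEs : supp (M0 + S N0 * d) (Ed mu wM N0)) by (apply Ed_supp, trunc_supp).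
 destruct (l2_add _ _ _ E (l2_supp _ _ HEs) Htl) as [_ Hb].
 pose proof (Ed_bound mu M0 wM Hmu Hbm (trunc_supp M0 w) N0).
 assert (al ^ S N0 * nrm2 wM <= y * nrm2 w).
 { apply Rmult_le_compat. apply pow_le; lra. apply nrm2_nonneg. apply (l2_supp M0), trunc_supp. lra. auto. }
 assert (y * nrm2 w < eps / 4).
 { unfold y. apply Rmult_lt_reg_r with (4 * (nrm2 w + 1)). lra. field_simplify; try lra. }
 unfold wM in *. lra. Qed.

Lemma nrm2_self (a : seqC) : nrm2 (seq_sub a a) = 0.
Proof. unfold nrm2. rewrite (Series_fin _ 0). reflexivity. intros n _. unfold seq_sub.
 replace (Cminus (a n) (a n)) with (RtoC 0) by ring. apply Cmod2_0. Qed.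

Lemma G_cl x M : supp M x -> closure (graph_D0 A) x (A x).
Proof. intros Hx. split. apply (l2_supp M); auto. split. apply (l2_supp (M + d)), A_supp'; auto.
 intros eps Heps. exists x, (A x). split. split. exists M. exact Hx. reflexivity.
 rewrite !nrm2_self. lra. Qed.

Lemma inner_sym_D0 x u Mx Mu : supp Mx x -> supp Mu u -> inner (A u) x = inner u (A x).
Proof. intros Hx Hu. set (M := Nat.max Mx Mu).
 assert (Hx' : supp M x) by (apply supp_mono with Mx; auto; lia).
 assert (Hu' : supp M u) by (apply supp_mono with Mu; auto; lia).
 rewrite (Series_re_fin (A u) x (M + d)) by (apply A_supp'; auto).
 rewrite (Series_re_fin u (A x) (M + d)) by (apply supp_mono with M; auto; lia).
 apply (Sym k l xi f Hlk u x M Hu' Hx'). Qed.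

Lemma sym_limit phi x y u w : phi_ok phi ->
  (forall x' u' Mx Mu, supp Mx x' -> supp Mu u' ->
     Series (fun n => phi (Cmult (Cconj (A u' n)) (x' n))) = Series (fun n => phi (Cmult (Cconj (u' n)) (A x' n)))) ->
  closure (graph_D0 A) x y -> closure (graph_D0 A) u w ->
  Series (fun n => phi (Cmult (Cconj (w n)) (x n))) = Series (fun n => phi (Cmult (Cconj (u n)) (y n))).
Proof. intros Hphi Hs [Hx [Hy Hxy]] [Hu [Hw Huw]].
 apply Rminus_diag_uniq. apply (zero_of_small _ ((2 + nrm2 w + nrm2 x) + (2 + nrm2 u + nrm2 y))).
 { pose proof (nrm2_nonneg w Hw). pose proof (nrm2_nonneg x Hx). pose proof (nrm2_nonneg u Hu). pose proof (nrm2_nonneg y Hy). lra. }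
 intros delta Hd. assert (Hd2 : 0 < delta ^ 2) by (apply pow_lt; lra).
 destruct (Hxy _ Hd2) as [x' [y' [[[Mx Hx'] Ey'] [H1 H2]]]]. subst y'.
 destruct (Huw _ Hd2) as [u' [w' [[[Mu Hu'] Ew'] [H3 H4]]]]. subst w'.
 pose proof (phi_cont phi w (A u') x x' delta Hphi Hw (l2_supp (Mu + d) _ (A_supp' Mu u' Hu')) Hx (l2_supp Mx _ Hx') Hd
   ltac:(lra) ltac:(lra)).
 pose proof (phi_cont phi u u' y (A x') delta Hphi Hu (l2_supp Mu _ Hu') Hy (l2_supp (Mx + d) _ (A_supp' Mx x' Hx')) Hd
   ltac:(lra) ltac:(lra)).
 rewrite (Hs x' u' Mx Mu Hx' Hu') in H.
 apply Rabs_le_between in H. apply Rabs_le_between in H0. apply Rabs_le. lra. Qed.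

Lemma cl_sub_adj x y : closure (graph_D0 A) x y -> adjoint (closure (graph_D0 A)) x y.
Proof. intros Hcl. destruct Hcl as [Hx [Hy Hxy]] eqn:Hce. split; auto. split; auto.
 intros u w Huw. unfold inner. f_equal.
 - apply (sym_limit Re x y u w phi_re); auto.
   intros x' u' Mx Mu H1 H2. pose proof (inner_sym_D0 x' u' Mx Mu H1 H2). apply (f_equal fst) in H. exact H.
 - apply (sym_limit Im x y u w phi_im); auto.
   intros x' u' Mx Mu H1 H2. pose proof (inner_sym_D0 x' u' Mx Mu H1 H2). apply (f_equal snd) in H. exact H. Qed.

Definition wz (mu : R) (y z : seqC) (n : nat) : C := Cminus (z n) (Cmult (0, mu) (y n)).

Lemma ident x M y z mu : supp M x -> l2 y -> l2 z -> inner (A x) y = inner x z ->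
  Series (fun n => Im (Cmult (Cconj (seq_sub x y n)) (seq_sub (Amu mu x) (wz mu y z) n))) =
  Series (fun n => Im (Cmult (Cconj (y n)) (z n))) - mu * nrm2 (seq_sub x y).
Proof. intros Hx Hy Hz Hadj.
 pose proof (l2_supp M x Hx) as Lx. pose proof (l2_supp (M + d) _ (A_supp' M x Hx)) as LA.
 destruct (l2_sub x y Lx Hy) as [Lv _].
 set (t1 := fun n => Im (Cmult (Cconj (x n)) (A x n))).
 set (t2 := fun n => Im (Cmult (Cconj (x n)) (z n))).
 set (t3 := fun n => Im (Cmult (Cconj (A x n)) (y n))).
 set (t4 := fun n => Im (Cmult (Cconj (y n)) (z n))).
 set (t5 := fun n => Cmod (seq_sub x y n) ^ 2).
 assert (E : forall n, Im (Cmult (Cconj (seq_sub x y n)) (seq_sub (Amu mu x) (wz mu y z) n)) =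
    ((t1 n + - t2 n) + t3 n + t4 n) + - (mu * t5 n)).
 { intros n. unfold t1, t2, t3, t4, t5, seq_sub, Amu, wz. generalize (x n) (y n) (z n) (op_A k l xi f x n).
   intros [a1 a2] [b1 b2] [c1 c2] [e1 e2]. rewrite Cmod2_alt. simpl. ring. }
 rewrite (Series_ext _ _ E).
 assert (X1 : ex_series t1) by (apply ex_series_im; auto).
 assert (X2 : ex_series t2) by (apply ex_series_im; auto).
 assert (X3 : ex_series t3) by (apply ex_series_im; auto).
 assert (X4 : ex_series t4) by (apply ex_series_im; auto).
 assert (X5 : ex_series t5) by exact Lv.
 pose proof (exR_plus _ _ X1 (exR_opp _ X2)) as Y1.
 pose proof (exR_plus _ _ Y1 X3) as Y2. pose proof (exR_plus _ _ Y2 X4) as Y3.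
 pose proof (exR_opp _ (exR_scal mu _ X5)) as Y5.
 rewrite (Series_plus (fun n => t1 n + - t2 n + t3 n + t4 n) (fun n => - (mu * t5 n)) Y3 Y5).
 rewrite (Series_opp (fun n => mu * t5 n)), (Series_scal_l mu t5).
 rewrite (Series_plus (fun n => t1 n + - t2 n + t3 n) t4 Y2 X4).
 rewrite (Series_plus (fun n => t1 n + - t2 n) t3 Y1 X3).
 rewrite (Series_plus t1 (fun n => - t2 n) X1 (exR_opp _ X2)). rewrite (Series_opp t2).
 assert (S1 : Series t1 = 0) by (destruct (lowerA x M Hx) as [H _]; exact H).
 assert (S23 : Series t2 = Series t3) by (apply (f_equal snd) in Hadj; symmetry; exact Hadj).
 assert (S5 : Series t5 = nrm2 (seq_sub x y)) by reflexivity. rewrite S5, S1, S23. unfold t4. lra. Qed.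

Lemma Cmod_sub_sym (a b : C) : Cmod (Cminus a b) = Cmod (Cminus b a).
Proof. replace (Cminus a b) with (Copp (Cminus b a)) by ring. apply Cmod_opp. Qed.

Lemma adj_sub_cl y z : adjoint (closure (graph_D0 A)) y z -> closure (graph_D0 A) y z.
Proof. intros [Hy [Hz Hadj]].
 assert (adjD0 : forall x M, supp M x -> inner (A x) y = inner x z) by (intros x M Hx; apply Hadj; apply (G_cl x M Hx)).
 set (mu0 := sqrt (be / al) + 1).
 assert (Hm1 : 1 <= mu0) by (unfold mu0; pose proof (sqrt_pos (be / al)); lra).
 assert (Hbm : be <= al * mu0 ^ 2).
 { assert (be / al <= mu0 ^ 2). { unfold mu0. pose proof (sqrt_pos (be / al)).
     assert (be / al = sqrt (be / al) ^ 2) by (rewrite pow2_sqrt; auto; apply Rmult_le_pos; [lra| left; apply Rinv_0_lt_compat; lra]).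
     nra. }
   apply Rmult_le_compat_l with (r := al) in H; [|lra]. replace (al * (be / al)) with be in H by (field; lra). lra. }
 assert (Hbm' : be <= al * (- mu0) ^ 2) by (replace ((- mu0) ^ 2) with (mu0 ^ 2) by ring; auto).
 assert (Lwz : forall mu, l2 (wz mu y z)).
 { intros mu. destruct (l2_scal (0, mu) y (fun n => Cmult (0, mu) (y n)) (fun n => eq_refl) Hy) as [L _].
   destruct (l2_sub z _ Hz L) as [L' _]. exact L'. }
 set (s := Series (fun n => Im (Cmult (Cconj (y n)) (z n)))).
 assert (Key : forall mu, mu ^ 2 = mu0 ^ 2 -> forall eps, 0 < eps -> exists x M, supp M x /\
    nrm2 (seq_sub (Amu mu x) (wz mu y z)) < eps /\
    Rabs (s - mu * nrm2 (seq_sub x y)) <= (mu0 * nrm2 (seq_sub x y) + nrm2 (seq_sub (Amu mu x) (wz mu y z)) / mu0) / 2 /\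
    0 <= nrm2 (seq_sub x y) /\ 0 <= nrm2 (seq_sub (Amu mu x) (wz mu y z))).
 { intros mu Hmu eps Heps. assert (Hmu0 : mu <> 0) by (intros E; subst; nra).
   assert (Hb : be <= al * mu ^ 2) by (rewrite Hmu; auto).
   destruct (dens mu (wz mu y z) Hmu0 Hb (Lwz mu) eps Heps) as [x [M [Hx Hr]]].
   exists x, M. split; auto. split; auto.
   pose proof (l2_supp M x Hx) as Lx. destruct (l2_sub x y Lx Hy) as [Lv _].
   destruct (l2_sub (Amu mu x) (wz mu y z)) as [Lr _]; auto.
   { destruct (l2_sub (A x) (fun n => Cmult (0, mu) (x n))) as [L _].
     apply (l2_supp (M + d)), A_supp'; auto.
     apply (l2_scal (0, mu) x _ (fun n => eq_refl) Lx). exact L. }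
   unfold s. rewrite <- (ident x M y z mu Hx Hy Hz (adjD0 x M Hx)).
   split. apply phi_series_bound; auto. apply phi_im. lra.
   split; apply nrm2_nonneg; auto. }
 assert (Hs0 : s = 0).
 { apply Rle_antisym.
   - apply Rnot_lt_le. intros Hlt.
     destruct (Key (- mu0) ltac:(ring) s Hlt) as [x [M [Hx [Hr [Hb [HV Hrho]]]]]].
     set (V := nrm2 (seq_sub x y)) in *. set (rho := nrm2 (seq_sub (Amu (- mu0) x) (wz (- mu0) y z))) in *.
     assert (rho / mu0 <= rho). { unfold Rdiv. rewrite <- (Rmult_1_r rho) at 2. apply Rmult_le_compat_l; auto.
       rewrite <- Rinv_1. apply Rinv_le_contravar; lra. }
     apply Rabs_le_between in Hb. assert (0 <= mu0 * V) by (apply Rmult_le_pos; lra). lra.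
   - apply Rnot_lt_le. intros Hlt.
     destruct (Key mu0 eq_refl (- s) ltac:(lra)) as [x [M [Hx [Hr [Hb [HV Hrho]]]]]].
     set (V := nrm2 (seq_sub x y)) in *. set (rho := nrm2 (seq_sub (Amu mu0 x) (wz mu0 y z))) in *.
     assert (rho / mu0 <= rho). { unfold Rdiv. rewrite <- (Rmult_1_r rho) at 2. apply Rmult_le_compat_l; auto.
       rewrite <- Rinv_1. apply Rinv_le_contravar; lra. }
     apply Rabs_le_between in Hb. assert (0 <= mu0 * V) by (apply Rmult_le_pos; lra). lra. }
 split; auto. split; auto. intros eps Heps.
 destruct (Key mu0 eq_refl (eps / 5) ltac:(lra)) as [x [M [Hx [Hr [Hb [HV Hrho]]]]]].
 exists x, (A x). split. split. exists M; exact Hx. reflexivity.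
 set (V := nrm2 (seq_sub x y)) in *. set (rho := nrm2 (seq_sub (Amu mu0 x) (wz mu0 y z))) in *.
 rewrite Hs0 in Hb. apply Rabs_le_between in Hb.
 assert (HmV : mu0 * V <= rho / mu0) by lra.
 assert (Hm2V : mu0 ^ 2 * V <= rho).
 { apply Rmult_le_compat_l with (r := mu0) in HmV; [|lra]. replace (mu0 * (rho / mu0)) with rho in HmV by (field; lra).
   replace (mu0 ^ 2 * V) with (mu0 * (mu0 * V)) by ring. lra. }
 assert (HV1 : V <= mu0 ^ 2 * V) by (pose proof (pow_R1_Rle mu0 2 Hm1); nra).
 pose proof (l2_supp M x Hx) as Lx. destruct (l2_sub x y Lx Hy) as [Lv _].
 assert (Lr : l2 (seq_sub (Amu mu0 x) (wz mu0 y z))).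
 { destruct (l2_sub (Amu mu0 x) (wz mu0 y z)) as [Lr _]; auto.
   destruct (l2_sub (A x) (fun n => Cmult (0, mu0) (x n))) as [L _].
   apply (l2_supp (M + d)), A_supp'; auto.
   apply (l2_scal (0, mu0) x _ (fun n => eq_refl) Lx). exact L. }
 split.
 - rewrite (nrm2_ext2 _ (seq_sub x y)). fold V. lra. intros n. unfold seq_sub. apply Cmod_sub_sym.
 - destruct (l2_scal (Copp (RtoC 1)) _ (fun n => Cmult (Copp (RtoC 1)) (seq_sub (Amu mu0 x) (wz mu0 y z) n)) (fun n => eq_refl) Lr) as [L1 N1].
   destruct (l2_scal (Copp (0, mu0)) _ (fun n => Cmult (Copp (0, mu0)) (seq_sub x y n)) (fun n => eq_refl) Lv) as [L2 N2].
   assert (E : forall n, seq_sub z (A x) n = Cplus (Cmult (Copp (RtoC 1)) (seq_sub (Amu mu0 x) (wz mu0 y z) n))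
                                               (Cmult (Copp (0, mu0)) (seq_sub x y n))).
   { intros n. unfold seq_sub, Amu, wz. ring. }
   destruct (l2_add _ _ _ E L1 L2) as [_ Hle].
   rewrite N1, N2 in Hle. rewrite Cmod_opp, Cmod_1 in Hle. rewrite Cmod_opp, Cmod2_alt in Hle. simpl in Hle.
   fold rho V in Hle. lra. Qed.

End Main.

Theorem corollary3p6 (k l : nat) (xi : C) (f : nat -> R) :
  (l < k)%nat ->
  (forall n, 0 <= f n) ->
  (exists (kappa : R) (N : nat), 2 < kappa /\
     forall n : nat, (N <= n)%nat ->
       kappa * Cmod xi * sqrt (INR n ^ (k + l)) <= f n) ->
  essentially_self_adjoint (graph_D0 (op_A k l xi f)) /\
  bounded_below_D0 (op_A k l xi f).
Proof.
  intros Hlk Hf Hkap.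
  destruct (consts k l xi f Hlk Hf Hkap) as [al [be [Hal [Hbe Hc]]]].
  split.
  - unfold essentially_self_adjoint, self_adjoint. intros x y. split.
    + intros H. eapply cl_sub_adj; eauto.
    + intros H. eapply adj_sub_cl; eauto.
  - exists (- sqrt be). intros x [M Hx].
    destruct (lowerA k l xi f al be Hlk Hf Hal Hbe Hc x M Hx) as [H1 H2]. split; auto.
Qed.
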